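(* Let $T$ be a tetrahedron satisfying the maximum angle condition with bound $\theta_M<\pi$. Then $T$ has three edges $e_1,e_2,e_3$ (not necessarily sharing a common vertex) such that the matrix $M$ whose columns are the unit direction vectors of these edges satisfies $$|\det(M)|\ge c_m:=\min\{\sqrt3/2,\sin(\theta_M)\}\,\min\{\cos(\theta_M/2),\sin(\theta_M)\}^2,$$ and moreover $$\frac{c_m}{6}|e_1||e_2||e_3|\le|T|\le\frac16|e_1||e_2||e_3|.$$
   Context: A tetrahedron satisfies the maximum angle condition with bound $\theta_M$ if all its dihedral angles and all angles of its triangular faces are at most $\theta_M$. $|e_i|$ is the length of $e_i$, $|T|$ the volume of $T$. *)

(* Defs.v *)
From Stdlib Require Import Reals Lra.
Open Scope R_scope.

Record R3 := mkR3 { vx : R ; vy : R ; vz : R }.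

Definition vsub (a b : R3) : R3 := mkR3 (vx a - vx b) (vy a - vy b) (vz a - vz b).
Definition vscale (c : R) (a : R3) : R3 := mkR3 (c * vx a) (c * vy a) (c * vz a).
Definition dot (a b : R3) : R := vx a * vx b + vy a * vy b + vz a * vz b.
Definition vnorm (a : R3) : R := sqrt (dot a a).
Definition cross (a b : R3) : R3 :=
  mkR3 (vy a * vz b - vz a * vy b) (vz a * vx b - vx a * vz b) (vx a * vy b - vy a * vx b).

(* determinant of the 3x3 matrix whose columns are a, b, c *)
Definition det3 (a b c : R3) : R := dot a (cross b c).

Definition unitv (a : R3) : R3 := vscale (/ vnorm a) a.

Definition vangle (a b : R3) : R := acos (dot a b / (vnorm a * vnorm b)).

(* A tetrahedron is given by its four vertices p 0, p 1, p 2, p 3 (indices < 4). *)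
Definition tet_nondeg (p : nat -> R3) : Prop :=
  det3 (vsub (p 1%nat) (p 0%nat)) (vsub (p 2%nat) (p 0%nat)) (vsub (p 3%nat) (p 0%nat)) <> 0.

Definition tet_volume (p : nat -> R3) : R :=
  Rabs (det3 (vsub (p 1%nat) (p 0%nat)) (vsub (p 2%nat) (p 0%nat)) (vsub (p 3%nat) (p 0%nat))) / 6.

Definition face_angle (p : nat -> R3) (i j k : nat) : R :=
  vangle (vsub (p j) (p i)) (vsub (p k) (p i)).

Definition proj_orth (e a : R3) : R3 := vsub a (vscale (dot a e / dot e e) e).

Definition dihedral_angle (p : nat -> R3) (i j k l : nat) : R :=
  let e := vsub (p j) (p i) in
  vangle (proj_orth e (vsub (p k) (p i))) (proj_orth e (vsub (p l) (p i))).

Definition max_angle_cond (p : nat -> R3) (thM : R) : Prop :=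
  (forall i j k : nat, (i < 4)%nat -> (j < 4)%nat -> (k < 4)%nat ->
     i <> j -> i <> k -> j <> k -> face_angle p i j k <= thM) /\
  (forall i j k l : nat, (i < 4)%nat -> (j < 4)%nat -> (k < 4)%nat -> (l < 4)%nat ->
     i <> j -> i <> k -> i <> l -> j <> k -> j <> l -> k <> l ->
     dihedral_angle p i j k l <= thM).

Definition is_edge (i j : nat) : Prop := (i < j)%nat /\ (j < 4)%nat.

Definition edge_len (p : nat -> R3) (i j : nat) : R := vnorm (vsub (p j) (p i)).
Definition edge_dir (p : nat -> R3) (i j : nat) : R3 := unitv (vsub (p j) (p i)).

Definition c_m (thM : R) : R :=
  Rmin (sqrt 3 / 2) (sin thM) * (Rmin (cos (thM / 2)) (sin thM)) ^ 2.

(* Main.v *)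
Require Import Defs.
From Stdlib Require Import Reals Lra Psatz Lia.
Open Scope R_scope.


Definition cosv (a b : R3) : R := dot a b / (vnorm a * vnorm b).

Ltac vsimpl := unfold det3, dot, cross, vsub, vscale in *; simpl in *.

Lemma dot_ge0 v : 0 <= dot v v.
Proof. unfold dot; nra. Qed.

Lemma vnorm_sq v : vnorm v * vnorm v = dot v v.
Proof. unfold vnorm; apply sqrt_sqrt, dot_ge0. Qed.

Lemma vnorm_pos v : 0 < dot v v -> 0 < vnorm v.
Proof. intro; unfold vnorm; apply sqrt_lt_R0; auto. Qed.

Lemma lagrange u v : dot u u * dot v v - dot u v * dot u v = dot (cross u v) (cross u v).
Proof. vsimpl; ring. Qed.

Lemma CS u v : dot u v * dot u v <= dot u u * dot v v.
Proof. pose proof (lagrange u v); pose proof (dot_ge0 (cross u v)); lra. Qed.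

Lemma cosv_sq a b : 0 < dot a a -> 0 < dot b b ->
  cosv a b * cosv a b = dot a b * dot a b / (dot a a * dot b b).
Proof.
  intros Ha Hb. unfold cosv. rewrite <- (vnorm_sq a), <- (vnorm_sq b).
  pose proof (vnorm_pos a Ha); pose proof (vnorm_pos b Hb).
  field; lra.
Qed.

Lemma one_m_cosv_sq a b : 0 < dot a a -> 0 < dot b b ->
  1 - cosv a b * cosv a b = dot (cross a b) (cross a b) / (dot a a * dot b b).
Proof.
  intros Ha Hb. rewrite cosv_sq by auto. rewrite <- lagrange. field; lra.
Qed.

Lemma cosv_bound a b : 0 < dot a a -> 0 < dot b b -> -1 <= cosv a b <= 1.
Proof.
  intros Ha Hb. pose proof (one_m_cosv_sq a b Ha Hb).
  assert (0 <= dot (cross a b) (cross a b) / (dot a a * dot b b)).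
  { unfold Rdiv; apply Rmult_le_pos. apply dot_ge0. apply Rlt_le, Rinv_0_lt_compat; nra. }
  nra.
Qed.

Lemma acos_le x th : -1 <= x <= 1 -> 0 <= th <= PI -> acos x <= th -> cos th <= x.
Proof.
  intros Hx Hth H. rewrite <- (cos_acos x Hx). pose proof (acos_bound x).
  apply cos_decr_1; lra.
Qed.

Lemma vangle_cos a b th : 0 < dot a a -> 0 < dot b b -> 0 <= th <= PI ->
  vangle a b <= th -> cos th <= cosv a b.
Proof. intros. apply acos_le; auto. apply cosv_bound; auto. Qed.

Lemma proj_dot e x y : 0 < dot e e ->
  dot (proj_orth e x) (proj_orth e y) = dot (cross e x) (cross e y) / dot e e.
Proof. intro H. unfold proj_orth. vsimpl. field. unfold dot in H; lra. Qed.

Lemma proj_norm e x : 0 < dot e e ->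
  vnorm (proj_orth e x) * vnorm e = vnorm (cross e x).
Proof.
  intro H. unfold vnorm. rewrite <- sqrt_mult by (apply dot_ge0).
  f_equal. rewrite proj_dot by auto. field. lra.
Qed.

Lemma proj_cos e x y : 0 < dot e e -> 0 < dot (cross e x) (cross e x) ->
  0 < dot (cross e y) (cross e y) ->
  cosv (proj_orth e x) (proj_orth e y) = cosv (cross e x) (cross e y).
Proof.
  intros H Hx Hy. unfold cosv. rewrite proj_dot by auto.
  pose proof (vnorm_pos _ Hx); pose proof (vnorm_pos _ Hy).
  rewrite <- (proj_norm e x H) in *. rewrite <- (proj_norm e y H) in *.
  rewrite <- (vnorm_sq e).
  pose proof (vnorm_pos e H).
  assert (vnorm (proj_orth e x) <> 0) by (intro Z; rewrite Z in *; lra).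
  assert (vnorm (proj_orth e y) <> 0) by (intro Z; rewrite Z in *; lra).
  field. repeat split; lra.
Qed.

Lemma three_units u v w U V W : 0 < U -> 0 < V -> 0 < W ->
  dot u u = U * U -> dot v v = V * V -> dot w w = W * W ->
  dot u v < - (U * V) / 2 -> dot u w < - (U * W) / 2 -> dot v w < - (V * W) / 2 -> False.
Proof.
  intros HU HV HW Hu Hv Hw H1 H2 H3.
  set (s := mkR3 (V*W*vx u + U*W*vx v + U*V*vx w) (V*W*vy u + U*W*vy v + U*V*vy w)
                 (V*W*vz u + U*W*vz v + U*V*vz w)).
  assert (E : dot s s = V*V*W*W*dot u u + U*U*W*W*dot v v + U*U*V*V*dot w w
     + 2*(U*V*W*W)*dot u v + 2*(U*V*W*V)*dot u w + 2*(U*V*W*U)*dot v w).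
  { unfold s, dot; simpl; ring. }
  pose proof (dot_ge0 s).
  assert (K : 0 < U*V*W) by (apply Rmult_lt_0_compat; [apply Rmult_lt_0_compat|]; lra).
  assert (2*(U*V*W*W)*dot u v < 2*(U*V*W*W)* (- (U*V)/2)).
  { apply Rmult_lt_compat_l; auto. apply Rmult_lt_0_compat; [lra| apply Rmult_lt_0_compat; lra]. }
  assert (2*(U*V*W*V)*dot u w < 2*(U*V*W*V)* (- (U*W)/2)).
  { apply Rmult_lt_compat_l; auto. apply Rmult_lt_0_compat; [lra| apply Rmult_lt_0_compat; lra]. }
  assert (2*(U*V*W*U)*dot v w < 2*(U*V*W*U)* (- (V*W)/2)).
  { apply Rmult_lt_compat_l; auto. apply Rmult_lt_0_compat; [lra| apply Rmult_lt_0_compat; lra]. }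
  rewrite Hu, Hv, Hw in E.
  assert (dot s s < 0).
  { rewrite E. 
    replace (V * V * W * W * (U * U) + U * U * W * W * (V * V) + U * U * V * V * (W * W))
      with (- (2*(U*V*W*W)* (- (U*V)/2) + 2*(U*V*W*V)* (- (U*W)/2) + 2*(U*V*W*U)* (- (V*W)/2)))
      by field.
    lra. }
  lra.
Qed.

Lemma vnorm_eq a b : dot a a = dot b b -> vnorm a = vnorm b.
Proof. intro H; unfold vnorm; rewrite H; auto. Qed.

Lemma half_aux x y : 0 < y -> 1/2 < x / y -> y / 2 < x.
Proof.
  intros Hy H. apply (Rmult_lt_compat_r y) in H; auto.
  replace (x / y * y) with x in H by (field; lra). lra.
Qed.

Lemma dihedral_half a b c :
  0 < dot (cross a b) (cross a b) -> 0 < dot (cross b c) (cross b c) ->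
  0 < dot (cross c a) (cross c a) ->
  cosv (cross a b) (cross a c) <= 1/2 \/ cosv (cross b a) (cross b c) <= 1/2 \/
  cosv (cross c a) (cross c b) <= 1/2.
Proof.
  intros Hu Hv Hw.
  assert (N1 : vnorm (cross a c) = vnorm (cross c a)) by (apply vnorm_eq; vsimpl; ring).
  assert (N2 : vnorm (cross b a) = vnorm (cross a b)) by (apply vnorm_eq; vsimpl; ring).
  assert (N3 : vnorm (cross c b) = vnorm (cross b c)) by (apply vnorm_eq; vsimpl; ring).
  assert (D1 : dot (cross a b) (cross a c) = - dot (cross a b) (cross c a)) by (vsimpl; ring).
  assert (D2 : dot (cross b a) (cross b c) = - dot (cross a b) (cross b c)) by (vsimpl; ring).
  assert (D3 : dot (cross c a) (cross c b) = - dot (cross b c) (cross c a)) by (vsimpl; ring).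
  unfold cosv. rewrite N1, N2, N3, D1, D2, D3.
  set (u := cross a b) in *; set (v := cross b c) in *; set (w := cross c a) in *.
  pose proof (vnorm_pos u Hu) as PU; pose proof (vnorm_pos v Hv) as PV;
  pose proof (vnorm_pos w Hw) as PW.
  destruct (Rle_dec (- dot u w / (vnorm u * vnorm w)) (1/2)) as [|A1]; [left; auto|].
  destruct (Rle_dec (- dot u v / (vnorm u * vnorm v)) (1/2)) as [|A2]; [right; left; auto|].
  destruct (Rle_dec (- dot v w / (vnorm w * vnorm v)) (1/2)) as [|A3]; [right; right; auto|].
  exfalso. apply Rnot_le_lt in A1, A2, A3.
  apply (three_units u v w (vnorm u) (vnorm v) (vnorm w)); auto;
    try (symmetry; apply vnorm_sq).
  - apply half_aux in A2; [lra|nra].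
  - apply half_aux in A1; [lra|nra].
  - apply half_aux in A3; [|nra]. rewrite (Rmult_comm (vnorm v)). lra.
Qed.

Lemma tri_real_aux x y z sx sy c m2 : 0 <= sx -> 0 <= sy ->
  sx*sx = 1 - x*x -> sy*sy = 1 - y*y -> z = sx*sy - x*y ->
  c <= x -> c <= z -> m2 <= 1 - c*c -> m2 <= (1+c)/2 -> x <= y ->
  m2 <= 1 - x*x.
Proof.
  intros Hsx Hsy Ex Ey Ez Hx Hz M1 M2 Hxy.
  destruct (Rle_dec x 0) as [Hx0|Hx0].
  - assert (x*x <= c*c) by nra. lra.
  - assert (sy <= sx) by nra.
    assert (sx*sy <= sx*sx) by nra.
    assert (x*x <= x*y) by nra.
    lra.
Qed.

Lemma tri_real x y z sx sy c m2 : 0 <= sx -> 0 <= sy ->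
  sx*sx = 1 - x*x -> sy*sy = 1 - y*y -> z = sx*sy - x*y ->
  c <= x -> c <= y -> c <= z -> m2 <= 1 - c*c -> m2 <= (1+c)/2 ->
  m2 <= 1 - x*x \/ m2 <= 1 - y*y.
Proof.
  intros H1 H2 H3 H4 H5 H6 H7 H8 H9 H10. destruct (Rle_dec x y).
  - left. apply (tri_real_aux x y z sx sy c m2); auto.
  - right. apply (tri_real_aux y x z sy sx c m2); auto; try lra.
Qed.

Lemma cosv_opp_l A B v : cosv (vsub A B) v = - cosv (vsub B A) v.
Proof.
  unfold cosv. rewrite (vnorm_eq (vsub A B) (vsub B A)) by (vsimpl; ring).
  replace (dot (vsub A B) v) with (- dot (vsub B A) v) by (vsimpl; ring).
  unfold Rdiv; ring.
Qed.

Lemma tri_vec X Y Z c m2 :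
  0 < dot (vsub Y X) (vsub Y X) -> 0 < dot (vsub Z X) (vsub Z X) ->
  0 < dot (vsub Z Y) (vsub Z Y) ->
  c <= cosv (vsub Y X) (vsub Z X) -> c <= cosv (vsub X Y) (vsub Z Y) ->
  c <= cosv (vsub X Z) (vsub Y Z) -> m2 <= 1 - c*c -> m2 <= (1+c)/2 ->
  m2 <= 1 - cosv (vsub Y X) (vsub Z X) * cosv (vsub Y X) (vsub Z X) \/
  m2 <= 1 - cosv (vsub Y X) (vsub Z Y) * cosv (vsub Y X) (vsub Z Y).
Proof.
  intros Ha Hb Hc H1 H2 H3 M1 M2.
  rewrite (cosv_opp_l Y X (vsub Z Y)).
  replace (- cosv (vsub X Y) (vsub Z Y) * - cosv (vsub X Y) (vsub Z Y)) with
    (cosv (vsub X Y) (vsub Z Y) * cosv (vsub X Y) (vsub Z Y)) by ring.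
  set (a := vsub Y X) in *; set (b := vsub Z X) in *.
  set (k := vnorm (cross a b)).
  pose proof (vnorm_pos a Ha) as PA; pose proof (vnorm_pos b Hb) as PB;
  pose proof (vnorm_pos _ Hc) as PC.
  assert (NXY : vnorm (vsub X Y) = vnorm a) by (apply vnorm_eq; unfold a; vsimpl; ring).
  assert (NXZ : vnorm (vsub X Z) = vnorm b) by (apply vnorm_eq; unfold b; vsimpl; ring).
  assert (NYZ : vnorm (vsub Y Z) = vnorm (vsub Z Y)) by (apply vnorm_eq; vsimpl; ring).
  assert (Hk : 0 <= k) by (unfold k, vnorm; apply sqrt_pos).
  apply (tri_real _ _ (cosv (vsub X Z) (vsub Y Z)) (k / (vnorm a * vnorm b))
     (k / (vnorm a * vnorm (vsub Z Y))) c m2); auto.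
  - apply Rmult_le_pos; auto. apply Rlt_le, Rinv_0_lt_compat; nra.
  - apply Rmult_le_pos; auto. apply Rlt_le, Rinv_0_lt_compat; nra.
  - rewrite one_m_cosv_sq by auto. rewrite <- (vnorm_sq a), <- (vnorm_sq b).
    unfold k; rewrite <- vnorm_sq. field; lra.
  - assert (dot (vsub X Y) (vsub X Y) = dot a a) by (unfold a; vsimpl; ring).
    rewrite one_m_cosv_sq by lra.
    replace (dot (cross (vsub X Y) (vsub Z Y)) (cross (vsub X Y) (vsub Z Y)))
      with (dot (cross a b) (cross a b)) by (unfold a, b; vsimpl; ring).
    rewrite H. rewrite <- (vnorm_sq a), <- (vnorm_sq (vsub Z Y)).
    unfold k; rewrite <- vnorm_sq. field; lra.
  - assert (E : dot a a * dot (vsub X Z) (vsub Y Z) =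
       dot (cross a b) (cross a b) - dot a b * dot (vsub X Y) (vsub Z Y))
      by (unfold a, b; vsimpl; ring).
    rewrite <- (vnorm_sq a) in E. fold k in E. rewrite <- vnorm_sq in E. fold k in E.
    unfold cosv. rewrite NXY, NXZ, NYZ.
    match goal with |- _ = ?r => replace r with
      ((k*k - dot a b * dot (vsub X Y) (vsub Z Y)) / (vnorm a * vnorm a * vnorm b * vnorm (vsub Z Y)))
      by (field; lra) end.
    rewrite <- E. field; lra.
Qed.

Lemma det_unit a b c : 0 < dot a a -> 0 < dot b b -> 0 < dot c c ->
  det3 (unitv a) (unitv b) (unitv c) = det3 a b c / (vnorm a * vnorm b * vnorm c).
Proof.
  intros Ha Hb Hc. pose proof (vnorm_pos a Ha); pose proof (vnorm_pos b Hb);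
  pose proof (vnorm_pos c Hc).
  unfold unitv. vsimpl. field. lra.
Qed.

Lemma det_unit_sq a b c : 0 < dot a a -> 0 < dot b b -> 0 < dot c c ->
  0 < dot (cross a b) (cross a b) -> 0 < dot (cross a c) (cross a c) ->
  det3 (unitv a) (unitv b) (unitv c) * det3 (unitv a) (unitv b) (unitv c) =
  (1 - cosv a b * cosv a b) * (1 - cosv a c * cosv a c) *
  (1 - cosv (cross a b) (cross a c) * cosv (cross a b) (cross a c)).
Proof.
  intros Ha Hb Hc Hab Hac.
  rewrite det_unit by auto. rewrite !one_m_cosv_sq by auto.
  replace (dot (cross (cross a b) (cross a c)) (cross (cross a b) (cross a c)))
    with (det3 a b c * det3 a b c * dot a a) by (vsimpl; ring).
  pose proof (vnorm_pos a Ha); pose proof (vnorm_pos b Hb);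
  pose proof (vnorm_pos c Hc).
  rewrite <- (vnorm_sq a), <- (vnorm_sq b), <- (vnorm_sq c).
  field. repeat split; lra.
Qed.

Lemma Rmin_sq x y : 0 <= x -> 0 <= y -> Rmin x y * Rmin x y = Rmin (x*x) (y*y).
Proof. intros. unfold Rmin. destruct (Rle_dec x y); destruct (Rle_dec (x*x) (y*y)); nra. Qed.

Lemma cm_facts th : 0 <= th < PI ->
  0 <= c_m th /\
  c_m th * c_m th = Rmin (3/4) (1 - cos th * cos th) *
     (Rmin ((1 + cos th)/2) (1 - cos th * cos th) * Rmin ((1 + cos th)/2) (1 - cos th * cos th)).
Proof.
  intros Hth.
  assert (S : 0 <= sin th) by (apply sin_ge_0; lra).
  assert (C2 : 0 <= cos (th/2)) by (apply cos_ge_0; lra).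
  assert (Q : 0 <= sqrt 3 / 2) by (pose proof (sqrt_pos 3); lra).
  pose proof (sin2_cos2 th) as SC. unfold Rsqr in SC.
  assert (Ch : cos (th/2) * cos (th/2) = (1 + cos th)/2).
  { replace th with (2 * (th/2)) at 3 by field. rewrite cos_2a_cos. field. }
  assert (Q2 : sqrt 3 / 2 * (sqrt 3 / 2) = 3/4).
  { replace (sqrt 3 / 2 * (sqrt 3 / 2)) with (sqrt 3 * sqrt 3 / 4) by field.
    rewrite sqrt_sqrt by lra. field. }
  assert (M1 : 0 <= Rmin (sqrt 3 / 2) (sin th)) by (apply Rmin_glb; auto).
  assert (M2 : 0 <= Rmin (cos (th/2)) (sin th)) by (apply Rmin_glb; auto).
  unfold c_m. split.
  - apply Rmult_le_pos; auto. apply pow_le; auto.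
  - simpl. rewrite Rmult_1_r.
    replace (_ * _) with ((Rmin (sqrt 3 / 2) (sin th) * Rmin (sqrt 3 / 2) (sin th)) *
      ((Rmin (cos (th / 2)) (sin th) * Rmin (cos (th / 2)) (sin th)) *
       (Rmin (cos (th / 2)) (sin th) * Rmin (cos (th / 2)) (sin th)))) by ring.
    rewrite !Rmin_sq by auto. rewrite Q2, Ch.
    replace (sin th * sin th) with (1 - cos th * cos th) by lra. reflexivity.
Qed.

Lemma le_abs_of_sq cm d : 0 <= cm -> cm * cm <= d * d -> cm <= Rabs d.
Proof.
  intros H1 H2. rewrite <- (Rabs_right cm) by lra.
  destruct (Rle_dec (Rabs cm) (Rabs d)) as [|N]; auto.
  exfalso. apply Rnot_le_lt in N. pose proof (Rabs_pos d).
  assert (Rabs d * Rabs d = d * d).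
  { rewrite <- Rabs_mult. apply Rabs_right. apply Rle_ge. nra. }
  rewrite (Rabs_right cm) in N by lra. nra.
Qed.

Lemma nz3 u v w : det3 u v w <> 0 ->
  0 < dot u u /\ 0 < dot v v /\ 0 < dot w w /\
  0 < dot (cross u v) (cross u v) /\ 0 < dot (cross u w) (cross u w) /\
  0 < dot (cross v w) (cross v w).
Proof.
  intro H. assert (D : 0 < det3 u v w * det3 u v w).
  { destruct (Rlt_dec 0 (det3 u v w)); [nra|].
    assert (det3 u v w < 0) by lra. nra. }
  assert (E1 : det3 u v w * det3 u v w <= dot u u * dot (cross v w) (cross v w))
    by (apply CS).
  assert (E2 : det3 u v w * det3 u v w <= dot v v * dot (cross w u) (cross w u)).
  { replace (det3 u v w) with (dot v (cross w u)) by (vsimpl; ring). apply CS. }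
  assert (E3 : det3 u v w * det3 u v w <= dot w w * dot (cross u v) (cross u v)).
  { replace (det3 u v w) with (dot w (cross u v)) by (vsimpl; ring). apply CS. }
  assert (E4 : dot (cross u w) (cross u w) = dot (cross w u) (cross w u)) by (vsimpl; ring).
  pose proof (dot_ge0 u); pose proof (dot_ge0 v); pose proof (dot_ge0 w);
  pose proof (dot_ge0 (cross u v)); pose proof (dot_ge0 (cross w u));
  pose proof (dot_ge0 (cross v w)).
  rewrite E4.
  repeat split; nra.
Qed.

Lemma main_gen X Y Z W th :
  det3 (vsub Y X) (vsub Z X) (vsub W X) <> 0 -> 0 <= th < PI ->
  cos th <= cosv (vsub Y X) (vsub Z X) -> cos th <= cosv (vsub X Y) (vsub Z Y) ->
  cos th <= cosv (vsub X Z) (vsub Y Z) ->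
  cos th <= cosv (vsub Y X) (vsub W X) -> cos th <= cosv (vsub X Y) (vsub W Y) ->
  cos th <= cosv (vsub X W) (vsub Y W) ->
  cos th <= cosv (cross (vsub Y X) (vsub Z X)) (cross (vsub Y X) (vsub W X)) <= 1/2 ->
  exists b' c', (b' = vsub Z X \/ b' = vsub Z Y) /\ (c' = vsub W X \/ c' = vsub W Y) /\
    c_m th <= Rabs (det3 (unitv (vsub Y X)) (unitv b') (unitv c')).
Proof.
  intros HD Hth F1 F2 F3 G1 G2 G3 Hd.
  set (c := cos th) in *.
  pose proof (COS_bound th) as CB. fold c in CB.
  set (m2 := Rmin ((1 + c)/2) (1 - c*c)).
  set (s1 := Rmin (3/4) (1 - c*c)).
  assert (m2a : m2 <= 1 - c*c) by apply Rmin_r.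
  assert (m2b : m2 <= (1 + c)/2) by apply Rmin_l.
  assert (m20 : 0 <= m2) by (apply Rmin_glb; nra).
  assert (s10 : 0 <= s1) by (apply Rmin_glb; nra).
  destruct (cm_facts th Hth) as [CM0 CMsq]. fold c m2 s1 in CMsq.
  set (a := vsub Y X) in *.
  destruct (nz3 _ _ _ HD) as (Pa & Pb & Pc & Pab & Pac & Pbc).
  assert (HD2 : det3 a (vsub Z Y) (vsub W X) <> 0).
  { replace (det3 a (vsub Z Y) (vsub W X)) with (det3 a (vsub Z X) (vsub W X)) by (unfold a; vsimpl; ring). auto. }
  assert (HD3 : det3 a (vsub Z X) (vsub W Y) <> 0).
  { replace (det3 a (vsub Z X) (vsub W Y)) with (det3 a (vsub Z X) (vsub W X)) by (unfold a; vsimpl; ring). auto. }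
  destruct (nz3 _ _ _ HD2) as (_ & Pb2 & _ & _ & _ & _).
  destruct (nz3 _ _ _ HD3) as (_ & _ & Pc2 & _ & _ & _).
  assert (Cb : cross a (vsub Z Y) = cross a (vsub Z X)) by (unfold a; vsimpl; f_equal; ring).
  assert (Cc : cross a (vsub W Y) = cross a (vsub W X)) by (unfold a; vsimpl; f_equal; ring).
  set (d := cosv (cross a (vsub Z X)) (cross a (vsub W X))) in *.
  assert (Hs1 : s1 <= 1 - d * d).
  { destruct (Rle_dec 0 d).
    - assert (d*d <= 1/4) by nra. unfold s1. pose proof (Rmin_l (3/4) (1-c*c)). lra.
    - assert (d*d <= c*c) by nra. unfold s1. pose proof (Rmin_r (3/4) (1-c*c)). lra. }
  assert (TB : m2 <= 1 - cosv a (vsub Z X) * cosv a (vsub Z X) \/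
               m2 <= 1 - cosv a (vsub Z Y) * cosv a (vsub Z Y)).
  { apply (tri_vec X Y _ c m2); auto. }
  assert (TC : m2 <= 1 - cosv a (vsub W X) * cosv a (vsub W X) \/
               m2 <= 1 - cosv a (vsub W Y) * cosv a (vsub W Y)).
  { apply (tri_vec X Y _ c m2); auto. }
  assert (FIN : forall b' c', 0 < dot b' b' -> 0 < dot c' c' ->
     cross a b' = cross a (vsub Z X) -> cross a c' = cross a (vsub W X) ->
     m2 <= 1 - cosv a b' * cosv a b' -> m2 <= 1 - cosv a c' * cosv a c' ->
     c_m th <= Rabs (det3 (unitv a) (unitv b') (unitv c'))).
  { intros b' c' Hb' Hc' E1 E2 M1 M2.
    assert (0 < dot (cross a b') (cross a b')) by (rewrite E1; auto).
    assert (0 < dot (cross a c') (cross a c')) by (rewrite E2; auto).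
    apply le_abs_of_sq; auto. rewrite det_unit_sq by auto.
    rewrite E1, E2. fold d. rewrite CMsq.
    replace (s1 * (m2 * m2)) with (m2 * m2 * s1) by ring.
    apply Rmult_le_compat; try nra. }
  destruct TB as [TB|TB]; destruct TC as [TC|TC].
  - exists (vsub Z X), (vsub W X). split; [left|split; [left|]]; auto.
  - exists (vsub Z X), (vsub W Y). split; [left|split; [right|]]; auto.
  - exists (vsub Z Y), (vsub W X). split; [right|split; [left|]]; auto.
  - exists (vsub Z Y), (vsub W Y). split; [right|split; [right|]]; auto.
Qed.

Lemma nondeg_perm p i j k l : tet_nondeg p ->
  (i < 4)%nat -> (j < 4)%nat -> (k < 4)%nat -> (l < 4)%nat ->
  i <> j -> i <> k -> i <> l -> j <> k -> j <> l -> k <> l ->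
  det3 (vsub (p j) (p i)) (vsub (p k) (p i)) (vsub (p l) (p i)) <> 0.
Proof.
  unfold tet_nondeg. intros H Hi Hj Hk Hl H1 H2 H3 H4 H5 H6 E. apply H.
  destruct i as [|[|[|[|i]]]]; try lia;
  destruct j as [|[|[|[|j]]]]; try lia;
  destruct k as [|[|[|[|k]]]]; try lia;
  destruct l as [|[|[|[|l]]]]; try lia;
  vsimpl; lra.
Qed.

Lemma face_cos p th i j k : tet_nondeg p -> max_angle_cond p th -> 0 <= th <= PI ->
  (i < 4)%nat -> (j < 4)%nat -> (k < 4)%nat -> i <> j -> i <> k -> j <> k ->
  cos th <= cosv (vsub (p j) (p i)) (vsub (p k) (p i)).
Proof.
  intros Hnd [Hf _] Hth Hi Hj Hk H1 H2 H3.
  assert (N := nondeg_perm p i j k (6 - i - j - k) Hnd Hi Hj Hk ltac:(lia) H1 H2 ltac:(lia) H3 ltac:(lia) ltac:(lia)).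
  destruct (nz3 _ _ _ N) as (P1 & P2 & _).
  apply vangle_cos; auto. apply Hf; auto.
Qed.

Lemma dih_cos p th i j k l : tet_nondeg p -> max_angle_cond p th -> 0 <= th <= PI ->
  (i < 4)%nat -> (j < 4)%nat -> (k < 4)%nat -> (l < 4)%nat ->
  i <> j -> i <> k -> i <> l -> j <> k -> j <> l -> k <> l ->
  cos th <= cosv (cross (vsub (p j) (p i)) (vsub (p k) (p i)))
                 (cross (vsub (p j) (p i)) (vsub (p l) (p i))).
Proof.
  intros Hnd [_ Hd] Hth Hi Hj Hk Hl H1 H2 H3 H4 H5 H6.
  assert (N := nondeg_perm p i j k l Hnd Hi Hj Hk Hl H1 H2 H3 H4 H5 H6).
  destruct (nz3 _ _ _ N) as (P1 & P2 & P3 & P4 & P5 & _).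
  rewrite <- proj_cos by auto.
  apply vangle_cos; auto.
  - rewrite proj_dot by auto. apply Rdiv_lt_0_compat; auto.
  - rewrite proj_dot by auto. apply Rdiv_lt_0_compat; auto.
  - apply (Hd i j k l); auto.
Qed.

Lemma det3_opp1 x y z : det3 (vscale (-1) x) y z = - det3 x y z.
Proof. vsimpl; ring. Qed.
Lemma det3_opp2 x y z : det3 x (vscale (-1) y) z = - det3 x y z.
Proof. vsimpl; ring. Qed.
Lemma det3_opp3 x y z : det3 x y (vscale (-1) z) = - det3 x y z.
Proof. vsimpl; ring. Qed.

Lemma unitv_flip A B : unitv (vsub A B) = vscale (-1) (unitv (vsub B A)).
Proof.
  unfold unitv. rewrite (vnorm_eq (vsub A B) (vsub B A)) by (vsimpl; ring).
  vsimpl. f_equal; ring.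
Qed.

Lemma flip1 A B y z : Rabs (det3 (unitv (vsub A B)) y z) = Rabs (det3 (unitv (vsub B A)) y z).
Proof. rewrite unitv_flip, det3_opp1, Rabs_Ropp; auto. Qed.
Lemma flip2 A B y z : Rabs (det3 y (unitv (vsub A B)) z) = Rabs (det3 y (unitv (vsub B A)) z).
Proof. rewrite unitv_flip, det3_opp2, Rabs_Ropp; auto. Qed.
Lemma flip3 A B y z : Rabs (det3 y z (unitv (vsub A B))) = Rabs (det3 y z (unitv (vsub B A))).
Proof. rewrite unitv_flip, det3_opp3, Rabs_Ropp; auto. Qed.

Lemma unit_dot v : 0 < dot v v -> dot (unitv v) (unitv v) = 1.
Proof.
  intro H. pose proof (vnorm_pos v H). pose proof (vnorm_sq v).
  unfold unitv. replace (dot (vscale (/ vnorm v) (v)) (vscale (/ vnorm v) v))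
    with (dot v v / (vnorm v * vnorm v)) by (vsimpl; field; lra).
  rewrite H1. field. lra.
Qed.

Lemma hadamard_unit x y z : 0 < dot x x -> 0 < dot y y -> 0 < dot z z ->
  Rabs (det3 (unitv x) (unitv y) (unitv z)) <= 1.
Proof.
  intros Hx Hy Hz. set (u := unitv x); set (v := unitv y); set (w := unitv z).
  assert (Eu : dot u u = 1) by (apply unit_dot; auto).
  assert (Ev : dot v v = 1) by (apply unit_dot; auto).
  assert (Ew : dot w w = 1) by (apply unit_dot; auto).
  assert (E1 : det3 u v w * det3 u v w <= dot u u * dot (cross v w) (cross v w)) by apply CS.
  pose proof (lagrange v w). pose proof (CS v w). pose proof (dot_ge0 (cross v w)).
  pose proof (Rabs_pos (det3 u v w)).
  assert (Rabs (det3 u v w) * Rabs (det3 u v w) = det3 u v w * det3 u v w).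
  { rewrite <- Rabs_mult. apply Rabs_right. apply Rle_ge. nra. }
  nra.
Qed.

Lemma finish p th i1 j1 i2 j2 i3 j3 :
  tet_nondeg p ->
  is_edge i1 j1 -> is_edge i2 j2 -> is_edge i3 j3 ->
  (i1, j1) <> (i2, j2) -> (i1, j1) <> (i3, j3) -> (i2, j2) <> (i3, j3) ->
  Rabs (det3 (vsub (p j1) (p i1)) (vsub (p j2) (p i2)) (vsub (p j3) (p i3))) =
  Rabs (det3 (vsub (p 1%nat) (p 0%nat)) (vsub (p 2%nat) (p 0%nat)) (vsub (p 3%nat) (p 0%nat))) ->
  c_m th <= Rabs (det3 (edge_dir p i1 j1) (edge_dir p i2 j2) (edge_dir p i3 j3)) ->
    is_edge i1 j1 /\ is_edge i2 j2 /\ is_edge i3 j3 /\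
    (i1, j1) <> (i2, j2) /\ (i1, j1) <> (i3, j3) /\ (i2, j2) <> (i3, j3) /\
    Rabs (det3 (edge_dir p i1 j1) (edge_dir p i2 j2) (edge_dir p i3 j3)) >= c_m th /\
    c_m th / 6 * (edge_len p i1 j1 * edge_len p i2 j2 * edge_len p i3 j3)
      <= tet_volume p /\
    tet_volume p <= / 6 * (edge_len p i1 j1 * edge_len p i2 j2 * edge_len p i3 j3).
Proof.
  intros Hnd E1 E2 E3 D1 D2 D3 HV HC.
  unfold tet_nondeg in Hnd. unfold tet_volume. rewrite <- HV in *.
  assert (ND : det3 (vsub (p j1) (p i1)) (vsub (p j2) (p i2)) (vsub (p j3) (p i3)) <> 0).
  { intro Z. rewrite Z, Rabs_R0 in HV. apply Hnd. destruct (Rcase_abs (det3 (vsub (p 1%nat) (p 0%nat)) (vsub (p 2%nat) (p 0%nat)) (vsub (p 3%nat) (p 0%nat)))) as [r|r].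
    - rewrite Rabs_left in HV; lra.
    - rewrite Rabs_right in HV; lra. }
  destruct (nz3 _ _ _ ND) as (P1 & P2 & P3 & _).
  pose proof (hadamard_unit _ _ _ P1 P2 P3) as HH.
  unfold edge_dir, edge_len in *. rewrite det_unit in HC, HH |- * by auto.
  pose proof (vnorm_pos _ P1); pose proof (vnorm_pos _ P2); pose proof (vnorm_pos _ P3).
  set (L := vnorm (vsub (p j1) (p i1)) * vnorm (vsub (p j2) (p i2)) * vnorm (vsub (p j3) (p i3))) in *.
  assert (LP : 0 < L) by (unfold L; repeat apply Rmult_lt_0_compat; auto).
  set (D := det3 (vsub (p j1) (p i1)) (vsub (p j2) (p i2)) (vsub (p j3) (p i3))) in *.
  unfold Rdiv in HC, HH. rewrite Rabs_mult, (Rabs_right (/ L)) in HC, HH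
    by (apply Rle_ge, Rlt_le, Rinv_0_lt_compat; auto).
  assert (Rabs D = Rabs D * / L * L) by (field; lra).
  refine (conj E1 (conj E2 (conj E3 (conj D1 (conj D2 (conj D3 _)))))).
  split; [|split].
  - unfold Rdiv. rewrite Rabs_mult, (Rabs_right (/ L)) by (apply Rle_ge, Rlt_le, Rinv_0_lt_compat; auto). lra.
  - rewrite H2. apply Rmult_le_compat_r with (r := / 6) in HC; [|lra]. nra.
  - rewrite H2. nra.
Qed.

Ltac absdet := first [ f_equal; unfold det3, dot, cross, vsub; simpl; ring
                     | rewrite <- Rabs_Ropp; f_equal; unfold det3, dot, cross, vsub; simpl; ring ].
Ltac neqp := let E := fresh in intro E; injection E; intros; lia.
Ltac fin Hnd Hdet :=
  apply finish; [exact Hnd | split; lia | split; lia | split; lia | neqp | neqp | neqp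
                | absdet | unfold edge_dir; exact Hdet].

Theorem lemmaC2 (p : nat -> R3) (thM : R) :
  tet_nondeg p -> thM < PI -> max_angle_cond p thM ->
  exists i1 j1 i2 j2 i3 j3 : nat,
    is_edge i1 j1 /\ is_edge i2 j2 /\ is_edge i3 j3 /\
    (i1, j1) <> (i2, j2) /\ (i1, j1) <> (i3, j3) /\ (i2, j2) <> (i3, j3) /\
    Rabs (det3 (edge_dir p i1 j1) (edge_dir p i2 j2) (edge_dir p i3 j3)) >= c_m thM /\
    c_m thM / 6 * (edge_len p i1 j1 * edge_len p i2 j2 * edge_len p i3 j3)
      <= tet_volume p /\
    tet_volume p <= / 6 * (edge_len p i1 j1 * edge_len p i2 j2 * edge_len p i3 j3).
Proof.
  intros Hnd Hlt Hmac.
  assert (T0 : 0 <= thM).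
  { destruct Hmac as [Hf _]. pose proof (Hf 0%nat 1%nat 2%nat ltac:(lia) ltac:(lia) ltac:(lia) ltac:(lia) ltac:(lia) ltac:(lia)) as H.
    unfold face_angle, vangle in H. pose proof (acos_bound (dot (vsub (p 1%nat) (p 0%nat)) (vsub (p 2%nat) (p 0%nat)) /
       (vnorm (vsub (p 1%nat) (p 0%nat)) * vnorm (vsub (p 2%nat) (p 0%nat))))). lra. }
  assert (Hth : 0 <= thM < PI) by lra.
  assert (Hth2 : 0 <= thM <= PI) by lra.
  assert (Hnd' := Hnd). unfold tet_nondeg in Hnd'.
  destruct (nz3 _ _ _ Hnd') as (_ & _ & _ & Q1 & Q2 & Q3).
  assert (Q4 : 0 < dot (cross (vsub (p 3%nat) (p 0%nat)) (vsub (p 1%nat) (p 0%nat)))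
                       (cross (vsub (p 3%nat) (p 0%nat)) (vsub (p 1%nat) (p 0%nat)))).
  { replace (dot (cross (vsub (p 3%nat) (p 0%nat)) (vsub (p 1%nat) (p 0%nat)))
                       (cross (vsub (p 3%nat) (p 0%nat)) (vsub (p 1%nat) (p 0%nat))))
     with (dot (cross (vsub (p 1%nat) (p 0%nat)) (vsub (p 3%nat) (p 0%nat)))
                       (cross (vsub (p 1%nat) (p 0%nat)) (vsub (p 3%nat) (p 0%nat))))
     by (unfold dot, cross, vsub; simpl; ring). auto. }
  destruct (dihedral_half _ _ _ Q1 Q3 Q4) as [H|[H|H]].
  - destruct (main_gen (p 0%nat) (p 1%nat) (p 2%nat) (p 3%nat) thM Hnd' Hth
      (face_cos p thM 0 1 2 Hnd Hmac Hth2 ltac:(lia) ltac:(lia) ltac:(lia) ltac:(lia) ltac:(lia) ltac:(lia))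
      (face_cos p thM 1 0 2 Hnd Hmac Hth2 ltac:(lia) ltac:(lia) ltac:(lia) ltac:(lia) ltac:(lia) ltac:(lia))
      (face_cos p thM 2 0 1 Hnd Hmac Hth2 ltac:(lia) ltac:(lia) ltac:(lia) ltac:(lia) ltac:(lia) ltac:(lia))
      (face_cos p thM 0 1 3 Hnd Hmac Hth2 ltac:(lia) ltac:(lia) ltac:(lia) ltac:(lia) ltac:(lia) ltac:(lia))
      (face_cos p thM 1 0 3 Hnd Hmac Hth2 ltac:(lia) ltac:(lia) ltac:(lia) ltac:(lia) ltac:(lia) ltac:(lia))
      (face_cos p thM 3 0 1 Hnd Hmac Hth2 ltac:(lia) ltac:(lia) ltac:(lia) ltac:(lia) ltac:(lia) ltac:(lia))
      (conj (dih_cos p thM 0 1 2 3 Hnd Hmac Hth2 ltac:(lia) ltac:(lia) ltac:(lia) ltac:(lia)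
          ltac:(lia) ltac:(lia) ltac:(lia) ltac:(lia) ltac:(lia) ltac:(lia)) H))
      as (b' & c' & Hb & Hc & Hdet).
    destruct Hb as [-> | ->]; destruct Hc as [-> | ->].
    + exists 0%nat, 1%nat, 0%nat, 2%nat, 0%nat, 3%nat. fin Hnd Hdet.
    + exists 0%nat, 1%nat, 0%nat, 2%nat, 1%nat, 3%nat. fin Hnd Hdet.
    + exists 0%nat, 1%nat, 1%nat, 2%nat, 0%nat, 3%nat. fin Hnd Hdet.
    + exists 0%nat, 1%nat, 1%nat, 2%nat, 1%nat, 3%nat. fin Hnd Hdet.
  - assert (N2 := nondeg_perm p 0 2 1 3 Hnd ltac:(lia) ltac:(lia) ltac:(lia) ltac:(lia)
       ltac:(lia) ltac:(lia) ltac:(lia) ltac:(lia) ltac:(lia) ltac:(lia)).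
    destruct (main_gen (p 0%nat) (p 2%nat) (p 1%nat) (p 3%nat) thM N2 Hth
      (face_cos p thM 0 2 1 Hnd Hmac Hth2 ltac:(lia) ltac:(lia) ltac:(lia) ltac:(lia) ltac:(lia) ltac:(lia))
      (face_cos p thM 2 0 1 Hnd Hmac Hth2 ltac:(lia) ltac:(lia) ltac:(lia) ltac:(lia) ltac:(lia) ltac:(lia))
      (face_cos p thM 1 0 2 Hnd Hmac Hth2 ltac:(lia) ltac:(lia) ltac:(lia) ltac:(lia) ltac:(lia) ltac:(lia))
      (face_cos p thM 0 2 3 Hnd Hmac Hth2 ltac:(lia) ltac:(lia) ltac:(lia) ltac:(lia) ltac:(lia) ltac:(lia))
      (face_cos p thM 2 0 3 Hnd Hmac Hth2 ltac:(lia) ltac:(lia) ltac:(lia) ltac:(lia) ltac:(lia) ltac:(lia))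
      (face_cos p thM 3 0 2 Hnd Hmac Hth2 ltac:(lia) ltac:(lia) ltac:(lia) ltac:(lia) ltac:(lia) ltac:(lia))
      (conj (dih_cos p thM 0 2 1 3 Hnd Hmac Hth2 ltac:(lia) ltac:(lia) ltac:(lia) ltac:(lia)
          ltac:(lia) ltac:(lia) ltac:(lia) ltac:(lia) ltac:(lia) ltac:(lia)) H))
      as (b' & c' & Hb & Hc & Hdet).
    destruct Hb as [-> | ->]; destruct Hc as [-> | ->].
    + exists 0%nat, 2%nat, 0%nat, 1%nat, 0%nat, 3%nat. fin Hnd Hdet.
    + exists 0%nat, 2%nat, 0%nat, 1%nat, 2%nat, 3%nat. fin Hnd Hdet.
    + rewrite flip2 in Hdet. exists 0%nat, 2%nat, 1%nat, 2%nat, 0%nat, 3%nat. fin Hnd Hdet.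
    + rewrite flip2 in Hdet. exists 0%nat, 2%nat, 1%nat, 2%nat, 2%nat, 3%nat. fin Hnd Hdet.
  - assert (N3 := nondeg_perm p 0 3 1 2 Hnd ltac:(lia) ltac:(lia) ltac:(lia) ltac:(lia)
       ltac:(lia) ltac:(lia) ltac:(lia) ltac:(lia) ltac:(lia) ltac:(lia)).
    destruct (main_gen (p 0%nat) (p 3%nat) (p 1%nat) (p 2%nat) thM N3 Hth
      (face_cos p thM 0 3 1 Hnd Hmac Hth2 ltac:(lia) ltac:(lia) ltac:(lia) ltac:(lia) ltac:(lia) ltac:(lia))
      (face_cos p thM 3 0 1 Hnd Hmac Hth2 ltac:(lia) ltac:(lia) ltac:(lia) ltac:(lia) ltac:(lia) ltac:(lia))
      (face_cos p thM 1 0 3 Hnd Hmac Hth2 ltac:(lia) ltac:(lia) ltac:(lia) ltac:(lia) ltac:(lia) ltac:(lia))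
      (face_cos p thM 0 3 2 Hnd Hmac Hth2 ltac:(lia) ltac:(lia) ltac:(lia) ltac:(lia) ltac:(lia) ltac:(lia))
      (face_cos p thM 3 0 2 Hnd Hmac Hth2 ltac:(lia) ltac:(lia) ltac:(lia) ltac:(lia) ltac:(lia) ltac:(lia))
      (face_cos p thM 2 0 3 Hnd Hmac Hth2 ltac:(lia) ltac:(lia) ltac:(lia) ltac:(lia) ltac:(lia) ltac:(lia))
      (conj (dih_cos p thM 0 3 1 2 Hnd Hmac Hth2 ltac:(lia) ltac:(lia) ltac:(lia) ltac:(lia)
          ltac:(lia) ltac:(lia) ltac:(lia) ltac:(lia) ltac:(lia) ltac:(lia)) H))
      as (b' & c' & Hb & Hc & Hdet).
    destruct Hb as [-> | ->]; destruct Hc as [-> | ->].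
    + exists 0%nat, 3%nat, 0%nat, 1%nat, 0%nat, 2%nat. fin Hnd Hdet.
    + rewrite flip3 in Hdet. exists 0%nat, 3%nat, 0%nat, 1%nat, 2%nat, 3%nat. fin Hnd Hdet.
    + rewrite flip2 in Hdet. exists 0%nat, 3%nat, 1%nat, 3%nat, 0%nat, 2%nat. fin Hnd Hdet.
    + rewrite flip2, flip3 in Hdet. exists 0%nat, 3%nat, 1%nat, 3%nat, 2%nat, 3%nat. fin Hnd Hdet.
Qed.
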